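(* Each of the following lattices is 3-remote, i.e. for every lattice point $z$ with $|z|=\sqrt3$ one has $\inf_{x\in K}|z-x|\ge1$, where $K$ is the Dirichlet region of the lattice: (1) $\mathbb{Z}\subset\mathbb{R}$; (2) $\mathbb{Z}[\mathbbm{i}]\subset\mathbb{C}$; (3) $\mathbb{Z}[\frac{1+\sqrt3\mathbbm{i}}{2}]\subset\mathbb{C}$; (4) the Hurwitz integers $\mathbb{Z}\oplus\mathbb{Z}\mathbbm{i}\oplus\mathbb{Z}\mathbbm{j}\oplus\mathbb{Z}\frac{1+\mathbbm{i}+\mathbbm{j}+\mathbbm{k}}{2}\subset\mathbb{H}$; (5) $\mathbb{Z}\oplus\mathbb{Z}\mathbbm{i}\oplus\mathbb{Z}\frac{1+\sqrt3\mathbbm{j}}{2}\oplus\mathbb{Z}\frac{\mathbbm{i}+\sqrt3\mathbbm{k}}{2}\subset\mathbb{H}$; (6) the Cayley integers $\mathbb{Z}\oplus\mathbb{Z}e_1\oplus\mathbb{Z}e_2\oplus\mathbb{Z}e_3\oplus\mathbb{Z}h\oplus\mathbb{Z}e_1h\oplus\mathbb{Z}e_2h\oplus\mathbb{Z}e_3h\subset\mathbb{O}$ with $h=(e_1+e_2+e_3-e_4)/2$; (7) $\mathbb{Z}(\frac1{\sqrt2},\frac1{\sqrt2},0)\oplus\mathbb{Z}(\frac1{\sqrt2},-\frac1{\sqrt2},0)\oplus\mathbb{Z}(\frac1{\sqrt2},0,\frac1{\sqrt2})\subset\mathbb{R}^3$; (8) $\mathbb{Z}(1,0,0)\oplus\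mathbb{Z}(\frac12,\frac{\sqrt3}2,0)\oplus\mathbb{Z}(0,0,1)\subset\mathbb{R}^3$.
   Context: $\mathbb{C},\mathbb{H},\mathbb{O}$ are identified with $\mathbb{R}^2,\mathbb{R}^4,\mathbb{R}^8$ via the bases $\{1,\mathbbm{i}\}$, $\{1,\mathbbm{i},\mathbbm{j},\mathbbm{k}\}$, $\{1,e_1,\dots,e_7\}$ (with $e_i^2=-1$), with Euclidean norm $|\cdot|$; octonion products in (6) are taken with the standard multiplication conventions used for the Cayley integers (Rehm's presentation). The Dirichlet region of a lattice $\mathcal{Z}$ is $K=\{x:|x|\le|x-z|\ \forall z\in\mathcal{Z}\}$. *)

(* Defs.v *)
From HB Require Import structures.
From mathcomp Require Import all_boot all_order all_algebra.
From mathcomp Require Import all_classical all_reals.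
Set Implicit Arguments. Unset Strict Implicit. Unset Printing Implicit Defensive.
Import Order.TTheory GRing.Theory Num.Theory.
Local Open Scope ring_scope.
Local Open Scope classical_set_scope.

Definition enorm (R : realType) (n : nat) (x : 'rV[R]_n) : R :=
  Num.sqrt (\sum_(i < n) x ord0 i ^+ 2).

Definition vec (R : realType) (n : nat) (s : seq R) : 'rV[R]_n :=
  \row_(i < n) s`_i.

Definition latt (R : realType) (n : nat) (bs : seq 'rV[R]_n) : set 'rV[R]_n :=
  [set z | exists k : nat -> int, z = \sum_(i < size bs) (bs`_i) *~ k i].

Definition dirichlet (R : realType) (n : nat) (L : set 'rV[R]_n) : set 'rV[R]_n :=
  [set x | forall z, L z -> enorm x <= enorm (x - z)].

Definition remote3 (R : realType) (n : nat) (L : set 'rV[R]_n) : Prop :=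
  forall z, L z -> enorm z = Num.sqrt 3 ->
    1 <= inf [set enorm (z - x) | x in dirichlet L].

(* Octonions: coordinates 0..7 w.r.t. the basis 1, e_1, ..., e_7, e_i^2 = -1,
   with the (Coxeter/Rehm) multiplication triples e_i e_{i+1} = e_{i+3} (mod 7):
   (1,2,4),(2,3,5),(3,4,6),(4,5,7),(5,6,1),(6,7,2),(7,1,3). *)
Definition fano : seq (nat * nat * nat) :=
  [:: (1,2,4); (2,3,5); (3,4,6); (4,5,7); (5,6,1); (6,7,2); (7,1,3)]%N.

Definition cyc (i j k : nat) : bool :=
  ((i, j, k) \in fano) || ((j, k, i) \in fano) || ((k, i, j) \in fano).

Definition octc (i j k : nat) : int :=
  if i == 0%N then ((j == k) : nat)%:Z
  else if j == 0%N then ((i == k) : nat)%:Z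
  else if i == j then - ((k == 0%N) : nat)%:Z
  else if cyc i j k then 1
  else if cyc j i k then -1
  else 0.

Definition omul (R : realType) (x y : 'rV[R]_8) : 'rV[R]_8 :=
  \row_(k < 8) \sum_(i < 8) \sum_(j < 8) (octc i j k)%:~R * x ord0 i * y ord0 j.

Definition oe (R : realType) (i : nat) : 'rV[R]_8 := \row_(k < 8) ((k == i :> nat) : nat)%:R.

Definition oh (R : realType) : 'rV[R]_8 := 2^-1 *: (oe R 1 + oe R 2 + oe R 3 - oe R 4).

(* Main.v *)
Require Import Defs.

From HB Require Import structures.
From mathcomp Require Import all_boot all_order all_algebra.
From mathcomp Require Import all_classical all_reals.
From Stdlib Require Import ZArith Lia.
From mathcomp Require Import ssrZ zify ring lra.
From Stdlib Require List.
Import Order.TTheory GRing.Theory Num.Theory.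
Set Implicit Arguments. Unset Strict Implicit. Unset Printing Implicit Defensive.

Section Checker.
Local Open Scope Z_scope.

Fixpoint csumZ (n : nat) (f : nat -> Z) : Z :=
  match n with S n' => csumZ n' f + f n' | O => 0 end.
Fixpoint rngZ (k : nat) (r : Z) : list Z :=
  match k with O => [::] | S k' => r :: rngZ k' (r - 1) end.
Fixpoint gen (ws : list Z) (r : Z) : list (list Z) :=
  match ws with
  | w :: ws' =>
     List.flat_map (fun t => if w * (t * t) <=? r then List.map (fun s => t :: s) (gen ws' (r - w * (t * t))) else [::])
        (rngZ (S (Z.to_nat (r + r))) r)
  | [::] => if r =? 0 then [:: [::]] else [::]
  end.
Fixpoint dotl (u y : list Z) : Z :=
  match u, y with a :: u', b :: y' => a * b + dotl u' y' | _, _ => 0 end.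
Fixpoint Qd (ws y r : list Z) : Z :=
  match ws with
  | w :: ws' => w * ((List.hd 0 y - List.hd 0 r) * (List.hd 0 y - List.hd 0 r)) + Qd ws' (List.tl y) (List.tl r)
  | [::] => 0 end.
Fixpoint qle (ws y r : list Z) (acc D : Z) : bool :=
  match ws with
  | w :: ws' => let acc' := acc + w * ((List.hd 0 y - List.hd 0 r) * (List.hd 0 y - List.hd 0 r)) in
                if D <? acc' then false else qle ws' (List.tl y) (List.tl r) acc' D
  | [::] => acc =? D end.
Fixpoint leqb (y r : list Z) : bool :=
  match y, r with
  | a :: y', b :: r' => (a =? b) && leqb y' r'
  | [::], [::] => true
  | _, _ => false end.
Definition lin (a : nat -> nat -> Z) (m : nat) (v : list Z) (j : nat) : Z :=
  csumZ m (fun i => List.nth i v 0 * a i j).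
Definition linv a m n v := List.map (lin a m v) (List.seq 0 n).
Definition solve (tests : list (list Z)) (M : Z) (y : list Z) := List.map (fun u => dotl u y / M) tests.
Definition chk (a : nat -> nat -> Z) (m : nat) (ws : list Z) (D : Z) (tests : list (list Z)) (M : Z) : bool :=
  List.forallb (fun w => 1 <=? w) ws &&
  let n := length ws in
  let RL := List.filter (fun p => leqb (linv a m n (fst p)) (snd p) && (Qd ws (snd p) [::] =? D))
              (List.map (fun y => (solve tests M y, y)) (gen ws D)) in
  List.forallb (fun y => match List.find (fun p => qle ws y (snd p) 0 D) RL with
                         | Some p => Qd ws y (snd p) =? D
                         | None => false end) (gen ws (3 * D)).

Lemma leqbP y r : leqb y r = true -> y = r.
Proof.
elim: y r => [|a y IH] [|b r] //= /andP [/Z.eqb_eq -> /IH ->] //.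
Qed.

Lemma in_rngZ k r t : List.In t (rngZ k r) <-> r - Z.of_nat k < t <= r.
Proof.
elim: k r => [|k IH] r /=; first by split => [[]|H]; lia.
rewrite IH; lia.
Qed.

Lemma Qd_ge0 ws y r : List.Forall (fun w => 0 <= w) ws -> 0 <= Qd ws y r.
Proof.
elim: ws y r => [|w ws IH] y r /=; first lia.
move=> H; inversion H; subst.
have := IH (List.tl y) (List.tl r) H3.
have := Z.mul_nonneg_nonneg _ _ H2 (Z.square_nonneg (List.hd 0 y - List.hd 0 r)); lia.
Qed.

Lemma gen_cons w ws r : gen (w :: ws) r =
  List.flat_map (fun t => if w * (t * t) <=? r then List.map (fun s => t :: s) (gen ws (r - w * (t * t))) else [::])
        (rngZ (S (Z.to_nat (r + r))) r).
Proof. by []. Qed.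

Lemma gen_complete ws y r : List.Forall (fun w => 1 <= w) ws -> length y = length ws ->
  Qd ws y [::] = r -> List.In y (gen ws r).
Proof.
elim: ws y r => [|w ws IH] y r Hw Hl Hr.
  case: y Hl Hr => //= _ <-; by left.
case: y Hl Hr => [//|t y] [Hl] Hr; rewrite /= in Hr.
rewrite gen_cons -Hr.
inversion Hw; subst.
have H0 : 0 <= Qd ws y [::].
  apply: Qd_ge0; apply: List.Forall_impl H2 => a; lia.
apply List.in_flat_map; exists t; split.
  have Ht1 : t <= t * t by nia.
  have Ht2 : - t <= t * t by nia.
  have Ht3 : t * t <= w * ((t - 0) * (t - 0)) by rewrite Z.sub_0_r; nia.
  apply in_rngZ; rewrite Nat2Z.inj_succ Z2Nat.id; lia.
have -> : (w * (t * t) <=? w * ((t - 0) * (t - 0)) + Qd ws y [::]) = true by apply/Z.leb_le; nia.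
apply List.in_map; apply: IH => //; lia.
Qed.

Lemma chk_sound a m ws D tests M : chk a m ws D tests M = true ->
  List.Forall (fun w => 1 <= w) ws /\
  forall y, List.In y (gen ws (3 * D)) -> exists v,
    Qd ws y (linv a m (length ws) v) = D /\ Qd ws (linv a m (length ws) v) [::] = D.
Proof.
rewrite /chk => /andP [H1 H2]; split.
  apply/List.Forall_forall => w Hw; move: H1 => /List.forallb_forall /(_ w Hw); lia.
move: H2 => /List.forallb_forall H2 y /H2.
case E: List.find => [p|//] /Z.eqb_eq Hy.
have [/List.filter_In [_ /andP [/leqbP Hl /Z.eqb_eq Hr]] _] := List.find_some _ _ E.
by exists p.1; rewrite Hl.
Qed.

End Checker.

Local Open Scope ring_scope.
Local Open Scope classical_set_scope.
Notation iZ := int_of_Z.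

Lemma iZD (a b : Z) : iZ (a + b)%Z = iZ a + iZ b. Proof. lia. Qed.
Lemma iZM (a b : Z) : iZ (a * b)%Z = iZ a * iZ b. Proof. lia. Qed.
Lemma iZB (a b : Z) : iZ (a - b)%Z = iZ a - iZ b. Proof. lia. Qed.
Lemma iZ0 : iZ 0%Z = 0. Proof. lia. Qed.

Lemma csumE m f : iZ (csumZ m f) = \sum_(i < m) iZ (f i).
Proof. elim: m => [|m IH] /=; first by rewrite big_ord0. by rewrite big_ord_recr /= iZD IH. Qed.

Lemma hd_nth (y : list Z) : List.hd 0%Z y = List.nth 0 y 0%Z. Proof. by case: y. Qed.
Lemma nth_tl (y : list Z) j : List.nth j (List.tl y) 0%Z = List.nth j.+1 y 0%Z.
Proof. by case: y => //; case: j. Qed.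

Lemma QdE ws y r : iZ (Qd ws y r) =
  \sum_(j < length ws) iZ (List.nth j ws 0%Z) * (iZ (List.nth j y 0%Z) - iZ (List.nth j r 0%Z)) ^+ 2.
Proof.
elim: ws y r => [|w ws IH] y r /=; first by rewrite big_ord0.
rewrite big_ord_recl /= iZD IH iZM iZM iZB.
rewrite !hd_nth expr2; congr (_ + _).
by apply: eq_bigr => j _; rewrite !nth_tl.
Qed.

Lemma mxz0 (R : pzRingType) n (A : 'M[R]_(1,n)) k j : (A *~ k) ord0 j = A ord0 j *~ k.
Proof. case: k => d. by rewrite -!pmulrn mulmxnE. by rewrite !NegzE !mulrNz !mxE -!pmulrn mulmxnE. Qed.
Lemma mxz (R : pzRingType) n (A : 'M[R]_(1,n)) k j : (A *~ k) ord0 j = A ord0 j * k%:~R.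
Proof. by rewrite mxz0 mulrzr. Qed.

Definition sqn (R : realType) n (x : 'rV[R]_n) := \sum_(j < n) x ord0 j ^+ 2.
Definition dotr (R : realType) n (x y : 'rV[R]_n) := \sum_(j < n) x ord0 j * y ord0 j.

Lemma sqn_ge0 (R : realType) n (x : 'rV[R]_n) : 0 <= sqn x.
Proof. by apply: sumr_ge0 => j _; rewrite sqr_ge0. Qed.

Lemma sqnB (R : realType) n (x y : 'rV[R]_n) : sqn (x - y) = sqn x - 2 * dotr x y + sqn y.
Proof.
rewrite /sqn /dotr mulr_sumr -sumrB -big_split /=; apply: eq_bigr => j _; rewrite !mxE sqrrB mulr_natl.
reflexivity.
Qed.

Lemma dir_ineq (R : realType) n (L : set 'rV[R]_n) x w : dirichlet L x -> L w -> 2 * dotr x w <= sqn w.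
Proof.
move=> Hx Lw; have := Hx w Lw; rewrite /enorm ler_sqrt; last exact: sqn_ge0.
rewrite -/(sqn x) -/(sqn (x - w)) sqnB; lra.
Qed.

Lemma dotrDr (R : realType) n (x y z : 'rV[R]_n) : dotr x (y + z) = dotr x y + dotr x z.
Proof. rewrite /dotr -big_split /=; apply: eq_bigr => j _; rewrite !mxE; ring. Qed.

Lemma dotrC (R : realType) n (x y : 'rV[R]_n) : dotr x y = dotr y x.
Proof. rewrite /dotr; apply: eq_bigr => j _; exact: mulrC. Qed.

Lemma remote_of_decomp (R : realType) n (L : set 'rV[R]_n) :
  (forall z, L z -> enorm z = Num.sqrt 3 -> exists w1 w2, [/\ L w1, L w2, z = w1 + w2, sqn w1 = 1 & sqn w2 = 1]) ->
  remote3 L.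
Proof.
move=> H z Lz Hz; have [w1 [w2 [L1 L2 Ez S1 S2]]] := H z Lz Hz.
have Sz : sqn z = 3.
  have := congr1 (fun t => t ^+ 2) Hz; rewrite /enorm !sqr_sqrtr //; exact: sqn_ge0.
apply: lb_le_inf.
  exists (enorm (z - 0)), 0 => //.
  move=> y Ly; rewrite /enorm ler_sqrt ?sqn_ge0 //.
  by rewrite (_ : \sum_(j < n) (0 : 'rV[R]_n) ord0 j ^+ 2 = 0) ?sqn_ge0 // big1 // => j _; rewrite mxE expr0n.
move=> _ [x Kx <-].
rewrite /enorm -sqrtr1 ler_sqrt ?sqn_ge0 // -/(sqn (z - x)) sqnB.
have := dir_ineq Kx L1; have := dir_ineq Kx L2; have := sqn_ge0 x.
move=> ? ? ?; rewrite Sz Ez (dotrC (w1 + w2)) dotrDr; lra.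
Qed.

Lemma coordE (R : realType) n (bs : seq 'rV[R]_n) (tau : 'I_n -> R) (a : nat -> nat -> Z)
  (Hb : forall i (j : 'I_n), (ltn i (size bs)) -> bs`_i ord0 j = tau j * (iZ (a i j))%:~R)
  (c : nat -> int) (j : 'I_n) :
  (\sum_(i < size bs) bs`_i *~ c i) ord0 j = tau j * (\sum_(i < size bs) c i * iZ (a i j))%:~R.
Proof.
rewrite summxE (big_morph _ (@intrD _) (mulr0z 1)) mulr_sumr; apply: eq_bigr => i _.
rewrite mxz Hb; [ring | exact: ltn_ord].
Qed.

Lemma sqE (R : realType) n (tau : 'I_n -> R) (ws : list Z) (D : Z)
  (Ht : forall j : 'I_n, tau j ^+ 2 * (iZ D)%:~R = (iZ (List.nth j ws 0%Z))%:~R) (HD : (0 < D)%Z)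
  (f : nat -> int) :
  \sum_(j < n) (tau j * (f j)%:~R) ^+ 2 = (\sum_(j < n) iZ (List.nth j ws 0%Z) * f j ^+ 2)%:~R / (iZ D)%:~R.
Proof.
have HD' : (iZ D)%:~R != 0 :> R by rewrite intr_eq0; apply/eqP; lia.
rewrite (big_morph _ (@intrD _) (mulr0z 1)) mulr_suml; apply: eq_bigr => j _.
have -> : (iZ (List.nth j ws 0%Z) * f j ^+ 2)%:~R = (iZ (List.nth j ws 0%Z))%:~R * (f j)%:~R ^+ 2 :> R by ring.
rewrite -Ht; field; exact: HD'.
Qed.

Lemma sqn_lat (R : realType) n (bs : seq 'rV[R]_n) (tau : 'I_n -> R) (a : nat -> nat -> Z)
  (ws : list Z) (D : Z)
  (Hb : forall i (j : 'I_n), (ltn i (size bs)) -> bs`_i ord0 j = tau j * (iZ (a i j))%:~R)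
  (Ht : forall j : 'I_n, tau j ^+ 2 * (iZ D)%:~R = (iZ (List.nth j ws 0%Z))%:~R) (HD : (0 < D)%Z)
  (c : nat -> int) :
  sqn (\sum_(i < size bs) bs`_i *~ c i) =
  (\sum_(j < n) iZ (List.nth j ws 0%Z) * (\sum_(i < size bs) c i * iZ (a i j)) ^+ 2)%:~R / (iZ D)%:~R.
Proof.
rewrite /sqn -(sqE Ht HD (fun j => \sum_(i < size bs) c i * iZ (a i j))); apply: eq_bigr => j _; by rewrite (coordE Hb).
Qed.

Lemma remote3_gen (R : realType) n (bs : seq 'rV[R]_n) (tau : 'I_n -> R) (a : nat -> nat -> Z)
  (ws : list Z) (D : Z) tests M :
  chk a (size bs) ws D tests M = true -> length ws = n -> (0 < D)%Z ->
  (forall i (j : 'I_n), (ltn i (size bs)) -> bs`_i ord0 j = tau j * (iZ (a i j))%:~R) ->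
  (forall j : 'I_n, tau j ^+ 2 * (iZ D)%:~R = (iZ (List.nth j ws 0%Z))%:~R) ->
  remote3 (latt bs).
Proof.
move=> /chk_sound [Hw Hc] Hn HD Hb Ht; apply: remote_of_decomp => _ [k ->] Hz.
set m := size bs.
set yv := fun j : nat => \sum_(i < m) k i * iZ (a i j).
have Sz : sqn (\sum_(i < m) bs`_i *~ k i) = 3.
  have := congr1 (fun t => t ^+ 2) Hz; rewrite /enorm !sqr_sqrtr //; exact: sqn_ge0.
rewrite (sqn_lat Hb Ht HD) in Sz.
have Sy : \sum_(j < n) iZ (List.nth j ws 0%Z) * yv j ^+ 2 = 3 * iZ D.
  apply: (@intr_inj R); move: Sz; rewrite intrM.
  have HD' : (iZ D)%:~R != 0 :> R by rewrite intr_eq0; apply/eqP; lia.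
  move=> Sz; rewrite -[LHS](divfK HD') Sz; done.
set Y := List.map (fun j => Z_of_int (yv j)) (List.seq 0 n).
have HY : forall j : 'I_n, iZ (List.nth j Y 0%Z) = yv j.
  move=> j; have Hj := elimT ssrnat.ltP (ltn_ord j).
  rewrite /Y (List.nth_indep _ 0%Z (Z_of_int (yv 0%nat))); last by rewrite List.length_map List.length_seq.
  by rewrite List.map_nth List.seq_nth // Z_of_intK.
have QY : Qd ws Y [::] = (3 * D)%Z.
  apply: (can_inj int_of_ZK); rewrite QdE Hn iZM -Sy; apply: eq_bigr => j _.
  by rewrite HY; case: (nat_of_ord j) => [|?] /=; rewrite subr0.
have LY : length Y = length ws by rewrite List.length_map List.length_seq.
have [v [Q1 Q2]] := Hc Y (gen_complete Hw LY QY).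
set r := linv a m (length ws) v in Q1 Q2.
have Hr : forall j : 'I_n, iZ (List.nth j r 0%Z) = \sum_(i < m) iZ (List.nth i v 0%Z) * iZ (a i j).
  move=> j; have Hj := elimT ssrnat.ltP (ltn_ord j).
  rewrite /r /linv (List.nth_indep _ 0%Z (lin a m v 0)); last by rewrite List.length_map List.length_seq Hn.
  rewrite List.map_nth List.seq_nth ?Hn //.
  by rewrite /lin csumE; apply: eq_bigr => i _; rewrite iZM.
set cv := fun i => iZ (List.nth i v 0%Z).
exists (\sum_(i < m) bs`_i *~ cv i), (\sum_(i < m) bs`_i *~ (k i - cv i)); split.
- by exists cv.
- by exists (fun i => k i - cv i).
- by rewrite -big_split /=; apply: eq_bigr => i _; rewrite mulrzBr addrC subrK.
- rewrite (sqn_lat Hb Ht HD).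
  have HD' : (iZ D)%:~R != 0 :> R by rewrite intr_eq0; apply/eqP; lia.
  suff -> : \sum_(j < n) iZ (List.nth j ws 0%Z) * (\sum_(i < size bs) cv i * iZ (a i j)) ^+ 2 = iZ D.
    by rewrite divff.
  rewrite -[in RHS]Q2 QdE Hn; apply: eq_bigr => j _; rewrite Hr.
  by case: (nat_of_ord j) => [|?] /=; rewrite subr0.
- rewrite (sqn_lat Hb Ht HD (fun i => k i - cv i)).
  have HD' : (iZ D)%:~R != 0 :> R by rewrite intr_eq0; apply/eqP; lia.
  suff -> : \sum_(j < n) iZ (List.nth j ws 0%Z) * (\sum_(i < size bs) (k i - cv i) * iZ (a i j)) ^+ 2 = iZ D.
    by rewrite divff.
  rewrite -[in RHS]Q1 QdE Hn; apply: eq_bigr => j _; rewrite Hr HY.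
  congr (_ * (_ ^+ 2)); rewrite /yv -sumrB; apply: eq_bigr => i _; ring.
Qed.
Definition A1 : list (list Z) := [:: [:: 1]]%Z.
Definition T1 : list (list Z) := [:: [:: 1]]%Z.
Definition W1 : list Z := [:: 1]%Z.
Lemma c1 : chk (fun i j => List.nth j (List.nth i A1 [::]) 0%Z) 1 W1 1 T1 1 = true. Proof. by vm_compute. Qed.
Definition A2 : list (list Z) := [:: [:: 1; 0]; [:: 0; 1]]%Z.
Definition T2 : list (list Z) := [:: [:: 1; 0]; [:: 0; 1]]%Z.
Definition W2 : list Z := [:: 1; 1]%Z.
Lemma c2 : chk (fun i j => List.nth j (List.nth i A2 [::]) 0%Z) 2 W2 1 T2 1 = true. Proof. by vm_compute. Qed.
Definition A3 : list (list Z) := [:: [:: 2; 0]; [:: 1; 1]]%Z.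
Definition T3 : list (list Z) := [:: [:: 1; -1]; [:: 0; 2]]%Z.
Definition W3 : list Z := [:: 1; 3]%Z.
Lemma c3 : chk (fun i j => List.nth j (List.nth i A3 [::]) 0%Z) 2 W3 4 T3 2 = true. Proof. by vm_compute. Qed.
Definition A4 : list (list Z) := [:: [:: 2; 0; 0; 0]; [:: 0; 2; 0; 0]; [:: 0; 0; 2; 0]; [:: 1; 1; 1; 1]]%Z.
Definition T4 : list (list Z) := [:: [:: 4; 0; 0; -4]; [:: 0; 4; 0; -4]; [:: 0; 0; 4; -4]; [:: 0; 0; 0; 8]]%Z.
Definition W4 : list Z := [:: 1; 1; 1; 1]%Z.
Lemma c4 : chk (fun i j => List.nth j (List.nth i A4 [::]) 0%Z) 4 W4 4 T4 8 = true. Proof. by vm_compute. Qed.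
Definition A5 : list (list Z) := [:: [:: 2; 0; 0; 0]; [:: 0; 2; 0; 0]; [:: 1; 0; 1; 0]; [:: 0; 1; 0; 1]]%Z.
Definition T5 : list (list Z) := [:: [:: 2; 0; -2; 0]; [:: 0; 2; 0; -2]; [:: 0; 0; 4; 0]; [:: 0; 0; 0; 4]]%Z.
Definition W5 : list Z := [:: 1; 1; 3; 3]%Z.
Lemma c5 : chk (fun i j => List.nth j (List.nth i A5 [::]) 0%Z) 4 W5 4 T5 4 = true. Proof. by vm_compute. Qed.
Definition A6 : list (list Z) := [:: [:: 2; 0; 0; 0; 0; 0; 0; 0]; [:: 0; 2; 0; 0; 0; 0; 0; 0]; [:: 0; 0; 2; 0; 0; 0; 0; 0]; [:: 0; 0; 0; 2; 0; 0; 0; 0]; [:: 0; 1; 1; 1; -1; 0; 0; 0]; [:: -1; 0; 1; 0; 1; 0; 0; 1]; [:: -1; -1; 0; 0; -1; 1; 0; 0]; [:: -1; 0; 0; 0; 0; -1; -1; -1]]%Z.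
Definition T6 : list (list Z) := [:: [:: 8; 0; 0; 0; 0; 8; -24; 8]; [:: 0; 8; 0; 0; 8; 16; -8; -8]; [:: 0; 0; 8; 0; 8; 8; 8; -16]; [:: 0; 0; 0; 8; 8; 8; 0; -8]; [:: 0; 0; 0; 0; -16; -16; 0; 16]; [:: 0; 0; 0; 0; 0; 0; -16; 16]; [:: 0; 0; 0; 0; 0; 16; -16; 0]; [:: 0; 0; 0; 0; 0; 0; -16; 0]]%Z.
Definition W6 : list Z := [:: 1; 1; 1; 1; 1; 1; 1; 1]%Z.
Lemma c6 : chk (fun i j => List.nth j (List.nth i A6 [::]) 0%Z) 8 W6 4 T6 16 = true. Proof. by vm_compute. Qed.
Definition A7 : list (list Z) := [:: [:: 1; 1; 0]; [:: 1; -1; 0]; [:: 1; 0; 1]]%Z.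
Definition T7 : list (list Z) := [:: [:: 1; 1; -1]; [:: 1; -1; -1]; [:: 0; 0; 2]]%Z.
Definition W7 : list Z := [:: 1; 1; 1]%Z.
Lemma c7 : chk (fun i j => List.nth j (List.nth i A7 [::]) 0%Z) 3 W7 2 T7 2 = true. Proof. by vm_compute. Qed.
Definition A8 : list (list Z) := [:: [:: 2; 0; 0]; [:: 1; 1; 0]; [:: 0; 0; 2]]%Z.
Definition T8 : list (list Z) := [:: [:: 2; -2; 0]; [:: 0; 4; 0]; [:: 0; 0; 2]]%Z.
Definition W8 : list Z := [:: 1; 3; 1]%Z.
Lemma c8 : chk (fun i j => List.nth j (List.nth i A8 [::]) 0%Z) 3 W8 4 T8 4 = true. Proof. by vm_compute. Qed.


Arguments int_of_Z : simpl never.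
Lemma iZE0 (R : pzRingType) : (iZ 0%Z)%:~R = 0 :> R. Proof. by []. Qed.
Lemma iZE1 (R : pzRingType) : (iZ 1%Z)%:~R = 1 :> R. Proof. by []. Qed.
Lemma iZE2 (R : pzRingType) : (iZ 2%Z)%:~R = 2 :> R. Proof. by []. Qed.
Lemma iZE3 (R : pzRingType) : (iZ 3%Z)%:~R = 3 :> R. Proof. by []. Qed.
Lemma iZE4 (R : pzRingType) : (iZ 4%Z)%:~R = 4 :> R. Proof. by []. Qed.
Lemma iZEm1 (R : pzRingType) : (iZ (-1)%Z)%:~R = -1 :> R. Proof. by []. Qed.
Definition iZE := (iZE0, iZE1, iZE2, iZE3, iZE4, iZEm1).

Lemma l1 (R : realType) : remote3 (latt [:: vec 1 [:: (1 : R)]]).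
Proof.
eapply (@remote3_gen R 1 _ (fun _ => 1)); [exact: c1 | by [] | by [] | | ].
- move=> i j Hi; case: i Hi => [|//] _; case: j => [[|//] Hj]; rewrite /vec mxE /=; rewrite ?iZE; ring.
- move=> j; case: j => [[|//] Hj] /=; rewrite ?iZE; ring.
Qed.

Lemma l3 (R : realType) : remote3 (latt [:: vec 2 [:: 1; 0]; vec 2 [:: 2^-1; Num.sqrt (3 : R) / 2]]).
Proof.
have h3 : Num.sqrt (3 : R) ^+ 2 = 3 by rewrite sqr_sqrtr.
eapply (@remote3_gen R 2 _ (fun j : 'I_2 => if val j == 0%nat then 2^-1 else Num.sqrt (3 : R) / 2)); [exact: c3 | by [] | by [] | | ].
- move=> i j Hi; case: i Hi => [|[|//]] _; case: j => [[|[|//]] Hj]; rewrite /vec mxE /=; rewrite ?iZE; by field.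
- move=> j; case: j => [[|[|j]] Hj].
  + by rewrite /= ?iZE; field.
  + by rewrite /= expr_div_n h3 ?iZE; field.
  + by [].
Qed.

Lemma l2 (R : realType) : remote3 (latt [:: vec 2 [:: (1 : R); 0]; vec 2 [:: (0 : R); 1]]).
Proof.
eapply (@remote3_gen R 2 _ (fun _ => 1)); [exact: c2 | by [] | by [] | | ].
- move=> i j Hi; case: i Hi => [|[|//]] _; case: j => [[|[|//]] Hj]; rewrite /vec mxE /= ?iZE; by field.
- move=> j; case: j => [[|[|//]] Hj]; rewrite /= ?iZE; by field.
Qed.

Lemma l4 (R : realType) : remote3 (latt [:: vec 4 [:: (1 : R); 0; 0; 0]; vec 4 [:: 0; 1; 0; 0];
                    vec 4 [:: 0; 0; 1; 0]; vec 4 [:: 2^-1; 2^-1; 2^-1; 2^-1]]).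
Proof.
eapply (@remote3_gen R 4 _ (fun _ => 2^-1)); [exact: c4 | by [] | by [] | | ].
- move=> i j Hi; case: i Hi => [|[|[|[|//]]]] _; case: j => [[|[|[|[|//]]]] Hj]; rewrite /vec mxE /= ?iZE; by field.
- move=> j; case: j => [[|[|[|[|//]]]] Hj]; rewrite /= ?iZE; by field.
Qed.

Lemma l5 (R : realType) : remote3 (latt [:: vec 4 [:: (1 : R); 0; 0; 0]; vec 4 [:: 0; 1; 0; 0];
                    vec 4 [:: 2^-1; 0; Num.sqrt (3 : R) / 2; 0]; vec 4 [:: 0; 2^-1; 0; Num.sqrt (3 : R) / 2]]).
Proof.
have h3 : Num.sqrt (3 : R) ^+ 2 = 3 by rewrite sqr_sqrtr.
eapply (@remote3_gen R 4 _ (fun j : 'I_4 => if (val j < 2)%nat then 2^-1 else Num.sqrt (3 : R) / 2)); [exact: c5 | by [] | by [] | | ].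
- move=> i j Hi; case: i Hi => [|[|[|[|//]]]] _; case: j => [[|[|[|[|//]]]] Hj]; rewrite /vec mxE /= ?iZE; by field.
- move=> j; case: j => [[|[|[|[|//]]]] Hj]; rewrite /= ?expr_div_n ?h3 ?iZE; by field.
Qed.

Lemma l7 (R : realType) : remote3 (latt [:: vec 3 [:: 1 / Num.sqrt (2 : R); 1 / Num.sqrt (2 : R); 0];
   vec 3 [:: 1 / Num.sqrt (2 : R); - (1 / Num.sqrt (2 : R)); 0];
   vec 3 [:: 1 / Num.sqrt (2 : R); 0; 1 / Num.sqrt (2 : R)]]).
Proof.
have h2 : Num.sqrt (2 : R) ^+ 2 = 2 by rewrite sqr_sqrtr.
eapply (@remote3_gen R 3 _ (fun _ => 1 / Num.sqrt (2 : R))); [exact: c7 | by [] | by [] | | ].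
- move=> i j Hi; case: i Hi => [|[|[|//]]] _; case: j => [[|[|[|//]]] Hj]; rewrite /vec mxE /= ?iZE; ring.
- move=> j; case: j => [[|[|[|//]]] Hj]; rewrite /= expr_div_n h2 ?iZE; by field.
Qed.

Lemma l8 (R : realType) : remote3 (latt [:: vec 3 [:: (1 : R); 0; 0]; vec 3 [:: 2^-1; Num.sqrt (3 : R) / 2; 0];
                    vec 3 [:: (0 : R); 0; 1]]).
Proof.
have h3 : Num.sqrt (3 : R) ^+ 2 = 3 by rewrite sqr_sqrtr.
eapply (@remote3_gen R 3 _ (fun j : 'I_3 => if val j == 1%nat then Num.sqrt (3 : R) / 2 else 2^-1)); [exact: c8 | by [] | by [] | | ].
- move=> i j Hi; case: i Hi => [|[|[|//]]] _; case: j => [[|[|[|//]]] Hj]; rewrite /vec mxE /= ?iZE; by field.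
- move=> j; case: j => [[|[|[|//]]] Hj]; rewrite /= ?expr_div_n ?h3 ?iZE; by field.
Qed.


Lemma oeE (R : realType) p (j : 'I_8) : oe R p ord0 j = ((j == p :> nat) : nat)%:R.
Proof. by rewrite mxE. Qed.
Lemma ohE (R : realType) (j : 'I_8) : oh R ord0 j =
  2^-1 * (((j == 1%nat :> nat) : nat)%:R + ((j == 2%nat :> nat) : nat)%:R + ((j == 3%nat :> nat) : nat)%:R - ((j == 4%nat :> nat) : nat)%:R).
Proof. by rewrite !mxE. Qed.

Lemma omulE (R : realType) p (Hp : (p < 8)%nat) (k : 'I_8) : omul (oe R p) (oh R) ord0 k =
  2^-1 * (octc p 1 k + octc p 2 k + octc p 3 k - octc p 4 k)%:~R.
Proof.
rewrite /omul mxE (bigD1 (Ordinal Hp)) //=.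
rewrite [X in _ + X]big1 ?addr0; last first.
  move=> i Hi; apply: big1 => j _; rewrite oeE; move: Hi; rewrite -val_eqE /= => /negbTE ->; by rewrite mulr0 mul0r.
under eq_bigr => j _ do rewrite oeE /= eqxx mulr1.
rewrite !big_ord_recr big_ord0 /= !ohE /=; ring.
Qed.

Lemma oct1 (k : 'I_8) : octc 1 1 k + octc 1 2 k + octc 1 3 k - octc 1 4 k = iZ (List.nth k (List.nth 5 A6 [::]) 0%Z).
Proof. by case: k => [[|[|[|[|[|[|[|[|//]]]]]]]] Hk]; vm_compute. Qed.
Lemma oct2 (k : 'I_8) : octc 2 1 k + octc 2 2 k + octc 2 3 k - octc 2 4 k = iZ (List.nth k (List.nth 6 A6 [::]) 0%Z).
Proof. by case: k => [[|[|[|[|[|[|[|[|//]]]]]]]] Hk]; vm_compute. Qed.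
Lemma oct3 (k : 'I_8) : octc 3 1 k + octc 3 2 k + octc 3 3 k - octc 3 4 k = iZ (List.nth k (List.nth 7 A6 [::]) 0%Z).
Proof. by case: k => [[|[|[|[|[|[|[|[|//]]]]]]]] Hk]; vm_compute. Qed.

Lemma l6 (R : realType) : remote3 (latt [:: oe R 0; oe R 1; oe R 2; oe R 3; oh R;
                    omul (oe R 1) (oh R); omul (oe R 2) (oh R); omul (oe R 3) (oh R)]).
Proof.
eapply (@remote3_gen R 8 _ (fun _ => 2^-1)); [exact: c6 | by [] | by [] | | ].
- move=> i j Hi; case: i Hi => [|[|[|[|[|[|[|[|//]]]]]]]] _.
  1-4: rewrite /= oeE; case: j => [[|[|[|[|[|[|[|[|//]]]]]]]] Hj]; rewrite /= ?iZE; by field.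
  + rewrite /= ohE; case: j => [[|[|[|[|[|[|[|[|//]]]]]]]] Hj]; rewrite /= ?iZE; by field.
  + by rewrite /= omulE // oct1.
  + by rewrite /= omulE // oct2.
  + by rewrite /= omulE // oct3.
- move=> j; case: j => [[|[|[|[|[|[|[|[|//]]]]]]]] Hj]; rewrite /= ?iZE; by field.
Qed.

Theorem proposition2p6 (R : realType) :
  let s2 := Num.sqrt (2 : R) in
  let s3 := Num.sqrt (3 : R) in
  (* (1) Z in R *)
  remote3 (latt [:: vec 1 [:: (1 : R)]]) /\
  (* (2) Z[i] in C = R^2 *)
  remote3 (latt [:: vec 2 [:: (1 : R); 0]; vec 2 [:: (0 : R); 1]]) /\
  (* (3) Z[(1 + sqrt3 i)/2] in C *)
  remote3 (latt [:: vec 2 [:: 1; 0]; vec 2 [:: 2^-1; s3 / 2]]) /\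
  (* (4) Hurwitz integers in H = R^4 *)
  remote3 (latt [:: vec 4 [:: (1 : R); 0; 0; 0]; vec 4 [:: 0; 1; 0; 0];
                    vec 4 [:: 0; 0; 1; 0]; vec 4 [:: 2^-1; 2^-1; 2^-1; 2^-1]]) /\
  (* (5) Z + Z i + Z (1 + sqrt3 j)/2 + Z (i + sqrt3 k)/2 in H *)
  remote3 (latt [:: vec 4 [:: (1 : R); 0; 0; 0]; vec 4 [:: 0; 1; 0; 0];
                    vec 4 [:: 2^-1; 0; s3 / 2; 0]; vec 4 [:: 0; 2^-1; 0; s3 / 2]]) /\
  (* (6) Cayley integers in O = R^8 *)
  remote3 (latt [:: oe R 0; oe R 1; oe R 2; oe R 3; oh R;
                    omul (oe R 1) (oh R); omul (oe R 2) (oh R); omul (oe R 3) (oh R)]) /\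
  (* (7) in R^3 *)
  remote3 (latt [:: vec 3 [:: 1 / s2; 1 / s2; 0]; vec 3 [:: 1 / s2; - (1 / s2); 0];
                    vec 3 [:: 1 / s2; 0; 1 / s2]]) /\
  (* (8) in R^3 *)
  remote3 (latt [:: vec 3 [:: (1 : R); 0; 0]; vec 3 [:: 2^-1; s3 / 2; 0];
                    vec 3 [:: (0 : R); 0; 1]]).
Proof.
move=> s2 s3.
split; first exact: l1.
split; first exact: l2.
split; first exact: l3.
split; first exact: l4.
split; first exact: l5.
split; first exact: l6.
split; first exact: l7.
exact: l8.
Qed.
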